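(* Let $m\ge2$ be even, $n\ge2$, and let $\mathcal{A}$ be a positive semi-definite Hankel tensor of order $m$ and dimension $n$ with Vandermonde decomposition $\mathcal{A}=\sum_{k=1}^r\alpha_k u_k^m$, where $\alpha_k\in\mathbb{R}\setminus\{0\}$ and $u_k=(1,\mu_k,\dots,\mu_k^{n-1})^T$ with pairwise distinct real $\mu_k$. Then: (i) $\alpha_1+\alpha_2+\cdots+\alpha_r\ge0$; (ii) if $r>n$, then the number of indices $k$ with $\alpha_k>0$ is at least $n$; (iii) if $r\le n$, then $\alpha_k>0$ for all $k\in\{1,\dots,r\}$.
   Context: A Hankel tensor of order $m$ and dimension $n$ has entries $a_{i_1\cdots i_m}=v_{i_1+\cdots+i_m-m}$ for some vector $v=(v_0,\dots,v_{(n-1)m})$. For $u\in\mathbb{R}^n$, $u^m$ denotes the rank-one tensor with entries $u_{i_1}\cdots u_{i_m}$. $\mathcal{A}$ is positive semi-definite if $\mathcal{A}x^m=\sum a_{i_1\cdots i_m}x_{i_1}\cdots x_{i_m}\ge0$ for all $x\in\mathbb{R}^n$. *)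

(* Defs.v *)
From HB Require Import structures.
From mathcomp Require Import all_boot all_order all_algebra.
Set Implicit Arguments. Unset Strict Implicit. Unset Printing Implicit Defensive.
Import Order.TTheory GRing.Theory Num.Theory.
Local Open Scope ring_scope.

(* A real tensor of order m and dimension n: entries indexed by
   multi-indices (i_1,...,i_m), i.e. functions 'I_m -> 'I_n (0-based). *)
Definition tensor (R : Type) (m n : nat) := {ffun 'I_m -> 'I_n} -> R.

Definition hankel_tensor (R : Type) (m n : nat) (v : nat -> R) : tensor R m n :=
  fun idx => v (\sum_(j < m) (idx j : nat))%N.

Definition rank1_pow (R : comNzRingType) (m n : nat) (u : 'I_n -> R) : tensor R m n :=
  fun idx => \prod_(j < m) u (idx j).

Definition vandermonde_vec (R : comNzRingType) (n : nat) (mu : R) : 'I_n -> R :=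
  fun i => mu ^+ i.

Definition tensor_form (R : comNzRingType) (m n : nat) (A : tensor R m n)
  (x : 'I_n -> R) : R :=
  \sum_(idx : {ffun 'I_m -> 'I_n}) A idx * \prod_(j < m) x (idx j).

Definition tensor_psd (R : realFieldType) (m n : nat) (A : tensor R m n) : Prop :=
  forall x : 'I_n -> R, 0 <= tensor_form A x.

(* Main.v *)
Require Import Defs.
From HB Require Import structures.
From mathcomp Require Import all_boot all_order all_algebra.
Import Order.TTheory GRing.Theory Num.Theory.
Local Open Scope ring_scope.

Lemma form_eq (R : realFieldType) (m n r : nat) (A : tensor R m n)
  (alpha mu : 'I_r -> R)
  (Hdecomp : forall idx, A idx =
     \sum_(k < r) alpha k * @rank1_pow R m n (@vandermonde_vec R n (mu k)) idx)
  (x : 'I_n -> R) :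
  tensor_form A x = \sum_(k < r) alpha k * (\sum_(i < n) mu k ^+ i * x i) ^+ m.
Proof.
rewrite /tensor_form.
under eq_bigr => idx _ do rewrite Hdecomp big_distrl /=.
rewrite exchange_big; apply: eq_bigr => k _.
have E : forall y : R, y ^+ m = \prod_(j < m) y by move=> y; rewrite prodr_const card_ord.
rewrite E bigA_distr_bigA /= big_distrr /=.
apply: eq_bigr => idx _.
by rewrite /rank1_pow /vandermonde_vec -mulrA -big_split.
Qed.

Lemma key (R : realFieldType) (m n r : nat) (Hm_even : ~~ odd m) (Hm : (2 <= m)%N)
  (A : tensor R m n) (HA_psd : tensor_psd A)
  (alpha mu : 'I_r -> R) (Hmu : injective mu)
  (Hdecomp : forall idx, A idx =
     \sum_(k < r) alpha k * @rank1_pow R m n (@vandermonde_vec R n (mu k)) idx)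
  (S : {set 'I_r}) (k0 : 'I_r) :
  (#|S| < n)%N -> k0 \notin S -> (forall j, j \notin S -> alpha j <= 0) ->
  alpha k0 < 0 -> False.
Proof.
move=> HS Hk0 Hneg Hlt.
pose p : {poly R} := \prod_(z <- enum S) ('X - (mu z)%:P).
have Hsz : (size p <= n)%N by rewrite size_prod_XsubC -cardE.
have := HA_psd (fun i => p`_i); rewrite (@form_eq _ _ _ _ _ _ _ Hdecomp).
have Hev : forall j, \sum_(i < n) mu j ^+ i * p`_i = p.[mu j].
  by move=> j; rewrite (horner_coef_wide _ Hsz); apply: eq_bigr => i _; rewrite mulrC.
under eq_bigr => j _ do rewrite Hev.
rewrite (bigD1 k0) //= => H.
have Hpk : p.[mu k0] != 0.
  rewrite horner_prod prodf_seq_neq0; apply/allP => z; rewrite mem_enum => zS.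
  rewrite hornerXsubC subr_eq0; apply/implyP => _; apply/eqP => /Hmu E.
  by move: Hk0; rewrite E zS.
have H1 : alpha k0 * p.[mu k0] ^+ m < 0.
  by rewrite pmulr_llt0 // exprn_even_gt0 // Hpk orbT.
have H2 : \sum_(i < r | i != k0) alpha i * p.[mu i] ^+ m <= 0.
  apply: sumr_le0 => j _.
  case: (boolP (j \in S)) => jS.
    have -> : p.[mu j] = 0.
      rewrite horner_prod; apply/eqP; rewrite prodf_seq_eq0; apply/hasP.
      by exists j; rewrite ?mem_enum //= hornerXsubC subrr.
    rewrite expr0n; have -> : (m == 0%N) = false by case: (m) Hm.
    by rewrite mulr0.
  by apply: mulr_le0_ge0; [apply: Hneg | rewrite exprn_even_ge0].
have := ltr_leD H1 H2; rewrite addr0 => H3.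
by move: (le_lt_trans H H3); rewrite ltxx.
Qed.
Theorem proposition4p1 (R : realFieldType) (m n : nat)
  (Hm_even : ~~ odd m) (Hm : (2 <= m)%N) (Hn : (2 <= n)%N)
  (A : tensor R m n) (v : nat -> R)
  (HA_hankel : A = @hankel_tensor R m n v)
  (HA_psd : tensor_psd A)
  (r : nat) (alpha mu : 'I_r -> R)
  (Halpha : forall k, alpha k != 0)
  (Hmu : injective mu)
  (Hdecomp : forall idx, A idx =
     \sum_(k < r) alpha k * @rank1_pow R m n (@vandermonde_vec R n (mu k)) idx) :
  0 <= \sum_(k < r) alpha k /\
  ((n < r)%N -> (n <= #|[set k | (0 < alpha k)%R]|)%N) /\
  ((r <= n)%N -> forall k, 0 < alpha k).
Proof.
have Hneg0 : forall j, ~~ (0 < alpha j) -> alpha j < 0.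
  by move=> j; rewrite -leNgt lt_neqAle Halpha.
split.
  have Hsz : (size (1%R : {poly R}) <= n)%N by rewrite size_poly1 ltnW.
  have := HA_psd (fun i => (1 : {poly R})`_i).
  rewrite (@form_eq _ _ _ _ _ _ _ Hdecomp).
  have Hev : forall j, \sum_(i < n) mu j ^+ i * (1 : {poly R})`_i = 1.
    move=> j; rewrite -[RHS](hornerC 1 (mu j)) (horner_coef_wide _ Hsz).
    by apply: eq_bigr => i _; rewrite mulrC.
  by under eq_bigr => j _ do rewrite Hev expr1n mulr1.
split.
  move=> Hr; rewrite leqNgt; apply/negP => HS.
  set S := [set k | 0 < alpha k] in HS.
  case: (pickP (fun k => k \notin S)) => [k0 Hk0 | Hall].
    apply: (@key R m n r Hm_even Hm A HA_psd alpha mu Hmu Hdecomp S k0 HS Hk0).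
      by move=> j; rewrite inE => /Hneg0 /ltW.
    by apply: Hneg0; move: Hk0; rewrite inE.
  have HST : S = setT by apply/setP => k; rewrite in_setT; apply/negbFE; exact: Hall k.
  by move: HS; rewrite HST cardsT card_ord => HS; move: (ltn_trans HS Hr); rewrite ltnn.
move=> Hr k; rewrite ltNge le_eqVlt negb_or Halpha /=; apply/negP => Hk.
apply: (@key R m n r Hm_even Hm A HA_psd alpha mu Hmu Hdecomp [set~ k] k).
- by rewrite cardsC1 card_ord (prednK (leq_ltn_trans (leq0n _) (ltn_ord k))).
- by rewrite !inE eqxx.
- by move=> j; rewrite !inE negbK => /eqP ->; apply: ltW.
- by [].
Qed.
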